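(* Let $G=(V,A)$ be an acyclic digraph. Then $|A| \le \sqrt{2\, p_{\#}(G)}\,|V|$, where $p_{\#}(G) = \frac{1}{2}\sum_{u\in V} |d^+(u)-d^-(u)|$.
   Context: Digraphs are simple. A digraph is acyclic if it contains no directed cycle. For a vertex $u$, $d^+(u)$ and $d^-(u)$ denote its outdegree and indegree. *)

(* Defs.v *)
From mathcomp Require Import all_boot all_order all_algebra.
Set Implicit Arguments. Unset Strict Implicit. Unset Printing Implicit Defensive.
Import Order.TTheory GRing.Theory Num.Theory.

(* A simple digraph on a finite vertex type T is an irreflexive relation
   e : rel T (e u v means there is an arc u -> v). *)
Definition loopless (T : finType) (e : rel T) : Prop := forall x, ~~ e x x.

Definition arcs (T : finType) (e : rel T) : {set T * T} :=
  [set a | e a.1 a.2].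

Definition outdeg (T : finType) (e : rel T) (u : T) : nat := #|[set v | e u v]|.
Definition indeg (T : finType) (e : rel T) (u : T) : nat := #|[set v | e v u]|.

Definition acyclic (T : finType) (e : rel T) : Prop :=
  forall x y, e x y -> ~~ connect e y x.

Local Open Scope ring_scope.

Definition pimb (R : realFieldType) (T : finType) (e : rel T) : R :=
  2^-1 * \sum_(u : T) `|(outdeg e u)%:R - (indeg e u)%:R : R|.

(* Main.v *)
Require Import Defs.
From mathcomp Require Import all_boot all_order all_algebra zify ring lra.
Import Order.TTheory GRing.Theory Num.Theory.
Set Implicit Arguments.


Lemma topo (T : finType) (e : rel T) : acyclic e ->
  exists h : T -> nat, injective h /\ (forall u, h u < #|T|)%N /\
    (forall u v, e u v -> h u < h v)%N.
Proof.
move=> ac.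
pose anc u := [set v | connect e v u & v != u].
have ancS u v : e u v -> (#|anc u| < #|anc v|)%N.
  move=> euv; apply: proper_card; apply/properP; split.
    apply/subsetP => w; rewrite !inE => /andP [cwu nwu].
    rewrite (connect_trans cwu (connect1 euv)) /=.
    apply/eqP => wv; move: cwu; rewrite wv => cvu.
    by move: (ac _ _ euv); rewrite cvu.
  exists u; rewrite !inE ?eqxx ?andbF //.
  rewrite connect1 //=; apply/eqP => uv; move: euv; rewrite uv => evv.
  by move: (ac _ _ evv); rewrite connect0.
pose n := #|T|.
pose r u := index u (enum T).
pose key u := (#|anc u| * n + r u)%N.
have rk u : (r u < n)%N by rewrite /r /n cardE index_mem mem_enum.

have keyinj : injective key.
  move=> u v kuv; rewrite -(nth_index u (mem_enum _ u)) -(nth_index u (mem_enum _ v)).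
  congr nth.
  have := congr1 (modn^~ n) kuv; rewrite /key !modnMDl !modn_small //; exact: rk.
have keyS u v : e u v -> (key u < key v)%N.
  move=> /ancS; move: (rk u) (rk v); rewrite /key; nia.
pose h u := #|[set v | (key v < key u)%N]|.
have hS u v : (key u < key v)%N -> (h u < h v)%N.
  move=> kuv; apply: proper_card; apply/properP; split.
    by apply/subsetP => w; rewrite !inE => /ltn_trans; apply.
  by exists u; rewrite !inE ?ltnn.
exists h; split; last split.
- move=> u v huv; apply: keyinj; case: (ltngtP (key u) (key v)) => // /hS;
  by rewrite huv ltnn.
- move=> u; rewrite -cardsT; apply: proper_card; rewrite properT.
  by apply/eqP => /setP /(_ u); rewrite !inE ltnn.
- by move=> u v /keyS /hS.
Qed.
Local Open Scope ring_scope.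

Lemma sum_arcs1 (R : numDomainType) (T : finType) (e : rel T) (F : T -> R) :
  \sum_(a in arcs e) F a.1 = \sum_u F u * (outdeg e u)%:R.
Proof.
transitivity (\sum_x \sum_(y | e x y) F x).
  by rewrite pair_big_dep; apply: eq_bigl => a; rewrite inE.
apply: eq_bigr => x _.
rewrite (eq_bigl (fun y => y \in [set y | e x y])) ?sumr_const ?mulr_natr //.
by move=> y; rewrite inE.
Qed.

Lemma sum_arcs2 (R : numDomainType) (T : finType) (e : rel T) (F : T -> R) :
  \sum_(a in arcs e) F a.2 = \sum_u F u * (indeg e u)%:R.
Proof.
transitivity (\sum_x \sum_(y | e x y) F y).
  by rewrite pair_big_dep; apply: eq_bigl => a; rewrite inE.
rewrite (eq_bigr (fun x => \sum_y (if e x y then F y else 0))); last first.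
  by move=> x _; rewrite big_mkcond.
rewrite exchange_big; apply: eq_bigr => y _; rewrite -big_mkcond /=.
rewrite (eq_bigl (fun x => x \in [set x | e x y])) ?sumr_const ?mulr_natr //.
by move=> x; rewrite inE.
Qed.
Local Close Scope ring_scope. Local Open Scope nat_scope.

Lemma count_le (T : finType) (e : rel T) (h : T -> nat) :
  injective h -> (forall a, a \in arcs e -> h a.1 < h a.2) ->
  forall L, \sum_(b in arcs e) (h b.2 - h b.1 <= L : nat) <= L * #|T|.
Proof.
move=> hinj hlt; elim=> [|L IH].
  rewrite big1 // => b /hlt; rewrite -subn_gt0; by case: (_ - _).
have E x : (x <= L.+1 : nat) = (x <= L : nat) + (x == L.+1 : nat).
  by rewrite leq_eqVlt ltnS; case: eqP => [->|_]; rewrite ?ltnn ?addn0.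
under eq_bigr => b _ do rewrite E.
rewrite big_split /= mulSn addnC leq_add //.
have -> : \sum_(b in arcs e) (h b.2 - h b.1 == L.+1 : nat) =
   #|[set b in arcs e | h b.2 - h b.1 == L.+1]|.
  rewrite -sum1_card [RHS]big_mkcond [LHS]big_mkcond /=; apply: eq_bigr => b _.
  by rewrite !inE; case: (e b.1 b.2); case: (h b.2 - h b.1 == L.+1)%N.
apply: (@leq_card_in _ _ fst) => a b; rewrite !inE => /andP [Ha /eqP la]
   /andP [Hb /eqP lb] ab.
have ha : h a.1 < h a.2 by apply: hlt; rewrite inE.
have hb : h b.1 < h b.2 by apply: hlt; rewrite inE.
have : h a.2 = h b.2 by move: ab la lb ha hb => /= ->; lia.
move/hinj; move: ab; case: a {Ha la ha} => a1 a2; case: b {Hb lb hb} => b1 b2 /= -> -> //.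
Qed.

Lemma sq_le (T : finType) (e : rel T) (h : T -> nat) :
  injective h -> (forall a, a \in arcs e -> h a.1 < h a.2) ->
  #|arcs e| * #|arcs e| <= 2 * #|T| * \sum_(a in arcs e) (h a.2 - h a.1).
Proof.
move=> hinj hlt.
set l := fun a : T * T => h a.2 - h a.1.
rewrite -{1}sum1_card big_distrl /=.
apply: (@leq_trans (\sum_(a in arcs e) \sum_(b in arcs e) ((l b <= l a : nat) + (l a <= l b : nat)))).
  apply: leq_sum => a _; rewrite mul1n -sum1_card; apply: leq_sum => b _.
  by have := leq_total (l b) (l a); case: (l b <= l a); case: (l a <= l b).
under eq_bigr => a _ do rewrite big_split.
rewrite big_split /= [X in _ + X <= _]exchange_big addnn -mul2n -mulnA leq_mul2l /=.
rewrite big_distrr /=; apply: leq_sum => a _.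
by rewrite mulnC; apply: count_le.
Qed.
Unset Implicit Arguments.
Local Open Scope ring_scope.

Theorem proposition1p2 (R : rcfType) (T : finType) (e : rel T) :
  loopless e -> acyclic e ->
  (#|arcs e|)%:R <= Num.sqrt (2 * pimb R e) * (#|T|)%:R :> R.
Proof.
move=> _ ac; have [h [hinj [hn hlt]]] := topo ac.
have hlt' : forall a, a \in arcs e -> (h a.1 < h a.2)%N by move=> a; rewrite inE; apply: hlt.
have Hsq := sq_le hinj hlt'.
set n := #|T|; set m := #|arcs e|.
set S := (\sum_(a in arcs e) (h a.2 - h a.1))%N in Hsq.
set D := \sum_u `|(outdeg e u)%:R - (indeg e u)%:R : R|.
have -> : 2 * pimb R e = D by rewrite /pimb mulrA divff ?mul1r // pnatr_eq0.
have D0 : 0 <= D by apply: sumr_ge0 => u _.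
have H0 : \sum_u ((indeg e u)%:R - (outdeg e u)%:R) = 0 :> R.
  rewrite sumrB.
  have E1 : \sum_u (outdeg e u)%:R = \sum_(a in arcs e) (1:R).
    by rewrite (@sum_arcs1 R T e (fun _ => 1)); apply: eq_bigr => u _; rewrite mul1r.
  have E2 : \sum_u (indeg e u)%:R = \sum_(a in arcs e) (1:R).
    by rewrite (@sum_arcs2 R T e (fun _ => 1)); apply: eq_bigr => u _; rewrite mul1r.
  by rewrite E1 E2 subrr.
have HS : (S%:R : R) = \sum_u (h u)%:R * ((indeg e u)%:R - (outdeg e u)%:R).
  rewrite /S natr_sum.
  under eq_bigr => a Ha do rewrite natrB ?(ltnW (hlt' _ Ha)) //.
  rewrite sumrB (@sum_arcs1 R T e (fun u => (h u)%:R)) (@sum_arcs2 R T e (fun u => (h u)%:R)) -sumrB; apply: eq_bigr => u _.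
  by rewrite mulrBr.
have H2S : 2 * (S%:R : R) <= n.-1%:R * D.
  have -> : 2 * (S%:R : R) = \sum_u (2 * (h u)%:R - n.-1%:R) * ((indeg e u)%:R - (outdeg e u)%:R).
    under [RHS]eq_bigr => u _ do rewrite mulrBl.
    rewrite sumrB -mulr_sumr H0 mulr0 subr0 HS mulr_sumr.
    by apply: eq_bigr => u _; rewrite mulrA.
  rewrite /D mulr_sumr; apply: ler_sum => u _.
  apply: le_trans (ler_norm _) _.
  rewrite normrM (distrC (indeg e u)%:R); apply: ler_wpM2r => //.
  have : (h u)%:R <= n.-1%:R :> R by rewrite ler_nat; have := hn u; rewrite /n; lia.
  have : 0 <= (h u)%:R :> R by [].
  rewrite ler_norml; move=> ? ?; apply/andP; split; lra.
have Hm : (m%:R : R) ^+ 2 <= D * n%:R ^+ 2.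
  apply: (@le_trans _ _ ((2 * n * S)%:R)).
    by rewrite -natrX ler_nat expnS expn1.
  have -> : ((2 * n * S)%:R : R) = n%:R * (2 * S%:R) by rewrite !natrM; ring.
  apply: (@le_trans _ _ (n%:R * (n.-1%:R * D))).
    by apply: ler_wpM2l.
  have Hn : n.-1%:R <= n%:R :> R by rewrite ler_nat leq_pred.
  have Hn0 : 0 <= n%:R :> R by [].
  have Hn1 : 0 <= n.-1%:R :> R by [].
  rewrite [X in _ <= X]mulrC expr2 -mulrA; apply: ler_wpM2l => //; exact: ler_wpM2r.
have -> : (m%:R : R) = Num.sqrt ((m%:R : R) ^+ 2) by rewrite sqrtr_sqr ger0_norm.
rewrite -[X in _ <= _ * X]ger0_norm // -sqrtr_sqr -sqrtrM //.
exact: ler_wsqrtr.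
Qed.
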